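(* Let $\mathcal{B}$ be a unital Banach algebra, $q\in\mathbb{C}$ with $0<|q|<1$, and $x,y\in\mathcal{B}$ with $xy=q^{-1}yx$, such that the spectrum $\sigma(x)$ of $x$ in $\mathcal{B}$ satisfies $\sigma(x)_q=\sigma(x)$. Then every finite sum $f=\sum_{k\ge1}r_k(x)y^k$, where each $r_k$ is a rational function with no poles on $\sigma(x)$ and $r_k(0)=0$, is quasinilpotent in $\mathcal{B}$ (equivalently, in the closed subalgebra $\mathcal{A}_{q,x}$).
   Context: For $S\subseteq\mathbb{C}$, $S_q=\{0\}\cup\bigcup_{n\ge0}q^nS$ is its $q$-hull. For a rational function $r$ without poles on $\sigma(x)$, $r(x)\in\mathcal{B}$ is defined by the holomorphic (rational) functional calculus. $\mathcal{A}_{q,x}$ is the norm closure in $\mathcal{B}$ of the subalgebra generated by $y$ and all such $r(x)$. Quasinilpotent means spectrum $\{0\}$ (spectral radius zero). *)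

(* Defs.v *)
From mathcomp Require Import all_boot all_order all_algebra.
From mathcomp Require Import complex.
From mathcomp Require Import boolp classical_sets reals.
Set Implicit Arguments. Unset Strict Implicit. Unset Printing Implicit Defensive.
Import Order.TTheory GRing.Theory Num.Theory.
Local Open Scope classical_set_scope.
Local Open Scope ring_scope.

(* A complex unital Banach algebra is a (nontrivial) unital C-algebra
   B : unitAlgType R[i] (whose unit predicate is two-sided invertibility,
   cf. unitrP) equipped with a norm nrm : B -> R which is a complete,
   submultiplicative algebra norm with nrm 1 = 1. *)
Definition is_banach_algebra_norm (R : realType) (B : unitAlgType R[i])
    (nrm : B -> R) : Prop :=
  (forall x, 0 <= nrm x) /\
      (forall x, nrm x = 0 -> x = 0) /\
      (forall x y, nrm (x + y) <= nrm x + nrm y) /\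
      (forall (a : R[i]) x, ((nrm (a *: x))%:C)%C = `|a| * ((nrm x)%:C)%C) /\
      (forall x y, nrm (x * y) <= nrm x * nrm y) /\
      nrm 1 = 1 /\
      (forall u : nat -> B,
         (forall e : R, 0 < e -> exists N : nat, forall m n : nat,
            (N <= m)%N -> (N <= n)%N -> nrm (u m - u n) < e) ->
         exists l : B, forall e : R, 0 < e -> exists N : nat, forall n : nat,
            (N <= n)%N -> nrm (u n - l) < e).

Definition spectrum (R : realType) (B : unitAlgType R[i]) (x : B) : set R[i] :=
  [set l | ~ (l%:A - x \is a GRing.unit)].

Definition qhull (R : realType) (q : R[i]) (S : set R[i]) : set R[i] :=
  [set z | z = 0 \/ exists n : nat, exists2 s, S s & z = q ^+ n * s].

(* value r(x) of the rational function r = p / d (d without zeros on the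
   spectrum of x, so d(x) is invertible) under the rational functional
   calculus: r(x) = p(x) d(x)^{-1} *)
Definition rat_at (R : realType) (B : unitAlgType R[i])
  (p d : {poly R[i]}) (x : B) : B :=
  horner_alg x p * (horner_alg x d)^-1.

Definition quasinilpotent (R : realType) (B : unitAlgType R[i]) (x : B) :=
  spectrum x = [set 0].

(* Main.v *)
Require Import Defs.
From mathcomp Require Import all_boot all_order all_algebra.
From mathcomp Require Import complex.
From mathcomp Require Import boolp classical_sets reals.
From mathcomp Require Import ring lra.
Import Order.TTheory GRing.Theory Num.Theory.
Local Open Scope ring_scope.

Definition cm {R : realType} (a : R[i]) : R := complex.Re `|a|.

Lemma cmE {R : realType} (a : R[i]) : `|a| = ((cm a)%:C)%C.
Proof. by rewrite /cm normc_def. Qed.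

Lemma cC_inj {R : realType} (u v : R) : (u%:C)%C = (v%:C)%C -> u = v.
Proof. by case. Qed.

Lemma cm_ge0 {R : realType} (a : R[i]) : 0 <= cm a.
Proof. by rewrite -lecR -cmE normr_ge0. Qed.

Lemma cmM {R : realType} (a b : R[i]) : cm (a * b) = cm a * cm b.
Proof. by apply: cC_inj; rewrite rmorphM -!cmE normrM. Qed.

Lemma cmX {R : realType} (a : R[i]) k : cm (a ^+ k) = cm a ^+ k.
Proof. by apply: cC_inj; rewrite rmorphXn -!cmE normrX. Qed.

Lemma cmD {R : realType} (a b : R[i]) : cm (a + b) <= cm a + cm b.
Proof. by rewrite -lecR rmorphD -!cmE ler_normD. Qed.

Lemma cm1 {R : realType} : cm (1 : R[i]) = 1.
Proof. by apply: cC_inj; rewrite -cmE normr1. Qed.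

Lemma cmN {R : realType} (a : R[i]) : cm (- a) = cm a.
Proof. by apply: cC_inj; rewrite -!cmE normrN. Qed.

Lemma cmV {R : realType} (a : R[i]) : cm (a^-1) = (cm a)^-1.
Proof. by apply: cC_inj; rewrite fmorphV /= -!cmE normfV. Qed.

Lemma cm_eq0 {R : realType} (a : R[i]) : (cm a == 0) = (a == 0).
Proof.
apply/idP/idP => [/eqP h|/eqP ->]; last by rewrite /cm normr0.
by rewrite -normr_eq0 cmE h.
Qed.

Lemma small0 {R : realType} (a : R) : 0 <= a -> (forall e, 0 < e -> a < e) -> a = 0.
Proof.
move=> a0 h; case: (ltrgtP a 0) => // [|ha]; first by move=> ha; rewrite ltNge a0 in ha.
by have := h a ha; rewrite ltxx.
Qed.

Lemma bern {R : realType} (t : R) k : 0 <= t -> 1 + k%:R * t <= (1 + t) ^+ k.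
Proof.
move=> t0; elim: k => [|k ih]; first by rewrite mul0r addr0 expr0.
rewrite exprS -natr1.
have h1 : 0 <= 1 + t by lra.
apply: le_trans (ler_wpM2l h1 ih).
have : 0 <= k%:R * t * t by apply: mulr_ge0 => //; apply: mulr_ge0.
nra.
Qed.

Lemma pow_small {R : realType} (r e : R) : 0 <= r < 1 -> 0 < e ->
  exists N, forall k, (N <= k)%N -> r ^+ k < e.
Proof.
case/andP=> r0 r1 e0.
have [->|rn0] := eqVneq r 0.
  by exists 1%N => k k1; rewrite expr0n; case: k k1.
have rp : 0 < r by rewrite lt_def rn0.
set t := r^-1 - 1.
have t0 : 0 < t.
  by rewrite /t subr_gt0 -[X in X < _]invr1 ltf_pV2 // posrE.
have et0 : 0 <= (e * t)^-1 by rewrite invr_ge0; apply: mulr_ge0; lra.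
exists (Num.Def.archi_bound (e * t)^-1) => k kN.
have hN := archi_boundP et0.
have hk : (Num.Def.archi_bound (e * t)^-1)%:R <= k%:R :> R by rewrite ler_nat.
have hr : r = (1 + t)^-1 by rewrite /t addrC subrK invrK.
have hp : 0 < (1 + t) ^+ k by apply: exprn_gt0; lra.
rewrite hr exprVn -div1r ltr_pdivrMr //.
have hb := @bern R t k (ltW t0).
have : 1 < k%:R * (e * t).
  have := (ltr_pM2r (_ : 0 < e * t)) ((e * t)^-1) (k%:R).
  rewrite mulVf; last by rewrite mulf_neq0 // gt_eqF.
  move=> ->; [exact: lt_le_trans hN hk| by apply: mulr_gt0].
nra.
Qed.

Section Banach.
Variable R : realType.
Variable B : unitAlgType R[i].
Variable nrm : B -> R.
Hypothesis hN : is_banach_algebra_norm nrm.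

Lemma n_ge0 u : 0 <= nrm u. Proof. by case: hN. Qed.
Lemma n_eq0 u : nrm u = 0 -> u = 0. Proof. by case: hN => _ [] h _; apply: h. Qed.
Lemma nD u v : nrm (u + v) <= nrm u + nrm v. Proof. by case: hN => _ [] _ []. Qed.
Lemma nZ a u : nrm (a *: u) = cm a * nrm u.
Proof. by case: hN => _ [] _ [] _ [] h _; apply: cC_inj; rewrite h cmE -rmorphM. Qed.
Lemma nM u v : nrm (u * v) <= nrm u * nrm v.
Proof. by case: hN => _ [] _ [] _ [] _ [] h _. Qed.
Lemma n1 : nrm 1 = 1. Proof. by case: hN => _ [] _ [] _ [] _ [] _ []. Qed.
Lemma ncomplete (u : nat -> B) :
  (forall e : R, 0 < e -> exists N : nat, forall m n : nat,
            (N <= m)%N -> (N <= n)%N -> nrm (u m - u n) < e) ->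
  exists l : B, forall e : R, 0 < e -> exists N : nat, forall n : nat,
            (N <= n)%N -> nrm (u n - l) < e.
Proof. by case: hN => _ [] _ [] _ [] _ [] _ [] _; apply. Qed.
Lemma n0 : nrm 0 = 0.
Proof. by rewrite -(scale0r (0:B)) nZ (eqP (_ : cm (0:R[i]) == 0)) ?cm_eq0 // mul0r. Qed.
Lemma nNeg u : nrm (- u) = nrm u. Proof. by rewrite -scaleN1r nZ cmN cm1 mul1r. Qed.
Lemma nB u v : nrm (u - v) <= nrm u + nrm v. Proof. by rewrite -(nNeg v); apply: nD. Qed.
Lemma nsum (I : Type) (r : seq I) (P : pred I) (F : I -> B) :
  nrm (\sum_(i <- r | P i) F i) <= \sum_(i <- r | P i) nrm (F i).
Proof.
elim/big_rec2: _ => [|i y1 y2 _ h]; first by rewrite n0.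
exact: le_trans (nD _ _) (lerD (lexx _) h).
Qed.
Lemma nX u k : nrm (u ^+ k) <= nrm u ^+ k.
Proof.
elim: k => [|k ih]; first by rewrite !expr0 n1.
rewrite !exprS; apply: le_trans (nM _ _) _; apply: ler_wpM2l => //; exact: n_ge0.
Qed.

Definition tends (u : nat -> B) l := forall e : R, 0 < e -> exists N : nat, forall n : nat,
            (N <= n)%N -> nrm (u n - l) < e.

Lemma tends_uniq u a b : tends u a -> tends u b -> a = b.
Proof.
move=> ha hb; apply/eqP; rewrite -subr_eq0; apply/eqP/n_eq0/small0; first exact: n_ge0.
move=> e e0; have e2 : 0 < e / 2 by lra.
have [N1 h1] := ha _ e2; have [N2 h2] := hb _ e2.
have := h1 (maxn N1 N2) (leq_maxl _ _); have := h2 (maxn N1 N2) (leq_maxr _ _).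
set v := u _ => hv1 hv2.
have -> : a - b = (v - b) - (v - a) by rewrite opprB [RHS]addrC -addrA addKr.
apply: le_lt_trans (nB _ _) _; lra.
Qed.

Lemma tends_mull c u l : tends u l -> tends (fun n => c * u n) (c * l).
Proof.
move=> h e e0; have c0 := n_ge0 c.
have e1 : 0 < e / (nrm c + 1) by apply: divr_gt0 => //; lra.
have [N hn] := h _ e1; exists N => n nN.
rewrite -mulrBr; apply: le_lt_trans (nM _ _) _.
have := hn n nN; rewrite ltr_pdivlMr; last by lra.
move=> hh; have := n_ge0 (u n - l); nra.
Qed.

Lemma tends_mulr c u l : tends u l -> tends (fun n => u n * c) (l * c).
Proof.
move=> h e e0; have c0 := n_ge0 c.
have e1 : 0 < e / (nrm c + 1) by apply: divr_gt0 => //; lra.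
have [N hn] := h _ e1; exists N => n nN.
rewrite -mulrBl; apply: le_lt_trans (nM _ _) _.
have := hn n nN; rewrite ltr_pdivlMr; last by lra.
move=> hh; have := n_ge0 (u n - l); nra.
Qed.

Lemma tends_ext u v l : (forall n, u n = v n) -> tends u l -> tends v l.
Proof. by move=> h t e e0; have [N hn] := t e e0; exists N => n nN; rewrite -h; apply: hn. Qed.

Lemma geo_tail (n m : nat) : (n <= m)%N ->
  \sum_(n <= i < m) (2^-1 : R) ^+ i = 2 * (2^-1) ^+ n - 2 * (2^-1) ^+ m.
Proof.
elim: m => [|m ih]; first by rewrite leqn0 => /eqP ->; rewrite big_geq // subrr.
rewrite leq_eqVlt => /orP[/eqP ->|]; first by rewrite big_geq // subrr.
rewrite ltnS => hnm; rewrite big_nat_recr //= ih // exprS; by field.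
Qed.

Lemma neumann h : nrm h <= 2^-1 -> (1 - h) \is a GRing.unit.
Proof.
move=> hh.
pose S M := \sum_(i < M) h ^+ i.
have hx k : nrm (h ^+ k) <= (2^-1) ^+ k.
  apply: le_trans (nX _ _) _; apply: lerXn2r => //; rewrite ?nnegrE; [exact: n_ge0|lra].
have tail n m : (n <= m)%N -> nrm (S m - S n) <= 2 * (2^-1) ^+ n.
  move=> nm; rewrite /S -!(big_mkord xpredT (fun i => h ^+ i)).
  rewrite (big_cat_nat (leq0n n) nm) /= addrC addrK.
  apply: le_trans (nsum _ _ _ _) _.
  apply: le_trans (ler_sum _ (fun i _ => hx i)) _.
  rewrite geo_tail //; have : 0 <= (2^-1 : R) ^+ m by apply: exprn_ge0; lra.
  lra.
have h12 : 0 <= (2^-1 : R) < 1 by apply/andP; split; lra.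
have [s hs] : exists s, tends S s.
  apply: ncomplete => e e0.
  have e2 : 0 < e / 2 by lra.
  have [N hN'] := @pow_small R _ _ h12 e2.
  exists N => m n mN nN.
  wlog nm : m n mN nN / (n <= m)%N.
    move=> W; case: (leqP n m) => [|/ltnW] nm; first exact: W.
    by rewrite -nNeg opprB; apply: W.
  apply: le_lt_trans (tail _ _ nm) _; have := hN' n nN; lra.
have hp : tends (fun n => h ^+ n) 0.
  move=> e e0; have [N hN'] := @pow_small R _ _ h12 e0.
  exists N => n nN; rewrite subr0; exact: le_lt_trans (hx n) (hN' n nN).
have h1 : tends (fun n => 1 - h ^+ n) 1.
  move=> e e0; have [N hN'] := hp e e0; exists N => n nN.
  by rewrite addrC addKr nNeg; have := hN' n nN; rewrite subr0.
have SS n : (1 - h) * S n = 1 - h ^+ n /\ S n * (1 - h) = 1 - h ^+ n.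
  elim: n => [|n [ih1 ih2]]; first by rewrite /S big_ord0 mulr0 mul0r expr0 subrr.
  rewrite /S big_ord_recr /= -/(S n); split.
    by rewrite mulrDr ih1 mulrBl mul1r -exprS addrA subrK.
  by rewrite mulrDl ih2 mulrBr mulr1 -exprSr addrA subrK.
apply/unitrP; exists s; split.
  apply: (tends_uniq (fun n => S n * (1 - h))); first exact: tends_mulr.
  by apply: tends_ext h1 => n; case: (SS n).
apply: (tends_uniq (fun n => (1 - h) * S n)); first exact: tends_mull.
by apply: tends_ext h1 => n; case: (SS n).
Qed.

End Banach.

Arguments n_ge0 {R B nrm}. Arguments n_eq0 {R B nrm}. Arguments nD {R B nrm}.
Arguments nZ {R B nrm}. Arguments nM {R B nrm}. Arguments n1 {R B nrm}.
Arguments n0 {R B nrm}. Arguments nNeg {R B nrm}. Arguments nB {R B nrm}.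
Arguments nsum {R B nrm}. Arguments nX {R B nrm}. Arguments neumann {R B nrm}.

Section Alg.
Variable R : realType.
Variable B : unitAlgType R[i].
Variable nrm : B -> R.
Hypothesis hN : is_banach_algebra_norm nrm.
Variables (q : R[i]) (x y : B).
Hypothesis hq0 : 0 < cm q.
Hypothesis hq1 : cm q < 1.
Hypothesis hxy : y * x = q *: (x * y).
Hypothesis hS : forall l, spectrum x l -> spectrum x (q * l).
Hypothesis h0 : spectrum x 0.

Definition ev (e : {poly R[i]}) : B := horner_alg x e.
Definition T (k : nat) (e : {poly R[i]}) : {poly R[i]} := e \Po (q ^+ k *: 'X).

Lemma yXk k : y ^+ k * x = q ^+ k *: (x * y ^+ k).
Proof.
elim: k => [|k ih]; first by rewrite !expr0 mul1r mulr1 scale1r.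
by rewrite exprSr -mulrA hxy -scalerAr (mulrA (y ^+ k)) ih -scalerAl scalerA -exprS mulrA.
Qed.

Lemma evX : ev 'X = x. Proof. exact: horner_algX. Qed.
Lemma evC c : ev c%:P = c%:A. Proof. exact: horner_algC. Qed.

Lemma ycomm k e : y ^+ k * ev e = ev (T k e) * y ^+ k.
Proof.
elim/poly_ind: e => [|e c ih]; first by rewrite /T comp_poly0 /ev !rmorph0 mulr0 mul0r.
rewrite /T comp_polyD comp_polyM comp_polyX comp_polyC -/(T k e).
rewrite /ev !rmorphD !rmorphM /= -!/(ev _) evX evC.
rewrite [ev (_ *: _)]/ev linearZ /= horner_algX.
rewrite mulrDr mulrDl (mulrA (y ^+ k)) ih -mulrA yXk -[in RHS]mulrA -scalerAl.
by rewrite mul1r -scalerAl mulr_algl mulr_algr.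
Qed.

Lemma T0 e : T 0 e = e.
Proof. by rewrite /T expr0 scale1r comp_polyXr. Qed.

Lemma spec_qk k l : spectrum x l -> spectrum x (q ^+ k * l).
Proof.
elim: k => [|k ih] hl; first by rewrite expr0 mul1r.
by rewrite exprS -mulrA; apply: hS; apply: ih.
Qed.

Lemma T_spec k e : (forall l, spectrum x l -> e.[l] != 0) ->
  forall l, spectrum x l -> (T k e).[l] != 0.
Proof.
move=> he l hl; rewrite /T horner_comp hornerZ hornerX; apply: he; exact: spec_qk.
Qed.

Lemma spec_unit e : (forall l, spectrum x l -> e.[l] != 0) -> ev e \is a GRing.unit.
Proof.
move=> he.
have e0 : e != 0 by apply: contraNneq (he 0 h0) => ->; rewrite horner0.
have [rs hrs] := closed_field_poly_normal e.
rewrite hrs /ev linearZ /= rmorph_prod /= mulr_algl scaler_unit; last first.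
  by rewrite unitfE lead_coef_eq0.
apply: unitr_prod_in => z zin _.
rewrite rmorphB /= horner_algX horner_algC -opprB unitrN.
have ez : e.[z] = 0.
  rewrite hrs hornerZ; move: (root_prod_XsubC rs z); rewrite zin => /rootP ->.
  by rewrite mulr0.
case: (boolP (z%:A - x \is a GRing.unit)) => // hz.
have : spectrum x z by rewrite /spectrum /= ; apply/negP.
by move/he; rewrite ez eqxx.
Qed.

Lemma evTstep k e c : ev (T k (e * 'X + c%:P)) = ev (T k e) * (q ^+ k *: x) + c%:A.
Proof.
rewrite /T comp_polyD comp_polyM comp_polyX comp_polyC -/(T k e).
rewrite /ev !rmorphD !rmorphM /= -!/(ev _) evC.
by rewrite [ev (_ *: _)]/ev linearZ /= horner_algX mulr_algl.
Qed.

Definition rt k p d := ev (T k p) * (ev (T k d))^-1.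

Lemma rt0 p d : rt 0 p d = rat_at p d x.
Proof. by rewrite /rt !T0. Qed.

Lemma rat_comm k p d : (forall l, spectrum x l -> d.[l] != 0) ->
  y ^+ k * rat_at p d x = rt k p d * y ^+ k.
Proof.
move=> hd; have u0 := spec_unit _ hd; have uk := spec_unit _ (T_spec k _ hd).
change (y ^+ k * (ev p * (ev d)^-1) = ev (T k p) * (ev (T k d))^-1 * y ^+ k).
rewrite mulrA ycomm -!mulrA; congr (_ * _).
by rewrite -[RHS](mulrK u0) -(mulrA _^-1) ycomm mulKr.
Qed.

Lemma nC c : nrm (c%:A : B) = cm c.
Proof. by rewrite (nZ hN) (n1 hN) mulr1. Qed.

Lemma bound_ev e : exists b, 0 <= b /\ forall k, nrm (ev (T k e)) <= b.
Proof.
elim/poly_ind: e => [|e c [b [b0 hb]]].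
  by exists 0; split => // k; rewrite /T comp_poly0 /ev rmorph0 n0.
exists (b * nrm x + cm c); split.
  apply: addr_ge0; [apply: mulr_ge0 => //; exact: n_ge0 | exact: cm_ge0].
move=> k; rewrite evTstep.
apply: le_trans (nD hN _ _) _; apply: lerD; last by rewrite nC.
apply: le_trans (nM hN _ _) _; rewrite (nZ hN) cmX.
have h1 : cm q ^+ k <= 1 by apply: exprn_ile1; [exact: cm_ge0|exact: ltW].
have h2 := hb k; have h3 := n_ge0 hN x; have h4 := n_ge0 hN (ev (T k e)).
have h5 : 0 <= cm q ^+ k by apply: exprn_ge0; exact: cm_ge0.
have h6 : cm q ^+ k * nrm x <= nrm x by rewrite -[leRHS]mul1r; apply: ler_wpM2r.
apply: le_trans (ler_wpM2l h4 h6) _; exact: ler_wpM2r.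
Qed.

Lemma decomp0 (d : {poly R[i]}) : exists d1, d = d1 * 'X + (d.[0])%:P.
Proof.
have hr : root (d - (d.[0])%:P) 0 by rewrite rootE hornerD hornerN hornerC subrr.
move: hr; rewrite -dvdp_XsubCl polyC0 subr0 => /divpK h.
by exists ((d - (d.[0])%:P) %/ 'X); rewrite h subrK.
Qed.

Lemma bound_inv d : (forall l, spectrum x l -> d.[l] != 0) ->
  exists K, 0 <= K /\ forall k, nrm ((ev (T k d))^-1) <= K.
Proof.
move=> hd; set c := d.[0].
have c0 : c != 0 := hd 0 h0.
have [d1 hd1] := decomp0 d; rewrite -/c in hd1.
have [b1 [b10 hb1]] := bound_ev d1.
set M := cm c^-1 * b1 * nrm x.
have M0 : 0 <= M.
  by apply: mulr_ge0; [apply: mulr_ge0 => //; exact: cm_ge0|exact: n_ge0].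
set eps := (2 * (M + 1))^-1.
have eps0 : 0 < eps by rewrite invr_gt0; lra.
have epsE : eps * (2 * (M + 1)) = 1 by rewrite mulVf // gt_eqF //; lra.
have hq01 : 0 <= cm q < 1 by rewrite hq1 cm_ge0.
have [k0 hk0] := @pow_small R _ _ hq01 eps0.
exists (\sum_(k < k0) nrm ((ev (T k d))^-1) + 2 * cm c^-1); split.
  apply: addr_ge0; first by apply: sumr_ge0 => i _; exact: n_ge0.
  by apply: mulr_ge0 => //; exact: cm_ge0.
move=> k; case: (ltnP k k0) => hk.
  have hs : 0 <= 2 * cm c^-1 by apply: mulr_ge0 => //; exact: cm_ge0.
  rewrite -[leLHS]addr0; apply: lerD => //; rewrite (bigD1 (Ordinal hk)) //=.
  by rewrite lerDl; apply: sumr_ge0 => i _; exact: n_ge0.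
have uk := spec_unit _ (T_spec k _ hd).
set u := ev (T k d) in uk *.
set h := ev (T k d1) * (q ^+ k *: x).
have hu : u = c%:A + h by rewrite /u {1}hd1 evTstep addrC.
set g := c^-1 *: h.
have hh : nrm h <= b1 * (cm q ^+ k * nrm x).
  apply: le_trans (nM hN _ _) _; rewrite (nZ hN) cmX; apply: ler_wpM2r => //.
  by apply: mulr_ge0; [apply: exprn_ge0; exact: cm_ge0|exact: n_ge0].
have hg : nrm g <= 2^-1.
  rewrite /g (nZ hN).
  have hqk := hk0 k hk.
  have a1 := cm_ge0 (c^-1); have a2 := n_ge0 hN x.
  have a3 : 0 <= cm q ^+ k by apply: exprn_ge0; exact: cm_ge0.
  have : cm c^-1 * nrm h <= M * cm q ^+ k.
    apply: le_trans (ler_wpM2l a1 hh) _; rewrite /M; rewrite le_eqVlt; apply/orP; left; apply/eqP; ring.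
  have : M * cm q ^+ k <= M * eps by apply: ler_wpM2l => //; exact: ltW.
  nra.
set w := c *: u^-1.
have hw : (1 + g) * w = 1.
  rewrite /w -scalerAr scalerAl scalerDr /g scalerA mulfV // scale1r -hu.
  exact: mulrV.
have hw2 : w = 1 - g * w by rewrite -hw mulrDl mul1r addrK.
have nw : nrm w <= 2.
  have := nB hN 1 (g * w); rewrite -hw2 (n1 hN) => t1.
  have t2 := nM hN g w; have t3 := n_ge0 hN g; have t4 := n_ge0 hN w.
  nra.
have -> : u^-1 = c^-1 *: w by rewrite /w scalerA mulVf // scale1r.
rewrite (nZ hN).
have s0 : 0 <= \sum_(k < k0) nrm ((ev (T k d))^-1) by apply: sumr_ge0 => i _; exact: n_ge0.
have := cm_ge0 (c^-1); nra.
Qed.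

Lemma bound_rat p d : p.[0] = 0 -> (forall l, spectrum x l -> d.[l] != 0) ->
  exists C, 0 <= C /\ forall k, nrm (rt k p d) <= C * cm q ^+ k.
Proof.
move=> p0 hd.
have [p1 hp1] := decomp0 p; rewrite p0 in hp1.
have [b1 [b10 hb1]] := bound_ev p1.
have [K [K0 hK]] := bound_inv _ hd.
exists (b1 * nrm x * K); split.
  by apply: mulr_ge0 => //; apply: mulr_ge0 => //; exact: n_ge0.
move=> k; rewrite /rt {1}hp1 evTstep scale0r addr0.
apply: le_trans (nM hN _ _) _.
have a2 := n_ge0 hN x.
have a3 : 0 <= cm q ^+ k by apply: exprn_ge0; exact: cm_ge0.
have e1 : nrm (ev (T k p1) * (q ^+ k *: x)) <= b1 * nrm x * cm q ^+ k.
  apply: le_trans (nM hN _ _) _; rewrite (nZ hN) cmX.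
  apply: le_trans (ler_wpM2r (mulr_ge0 a3 a2) (hb1 k)) _; rewrite le_eqVlt; apply/orP; left; apply/eqP; ring.
have := hK k; have := n_ge0 hN ((ev (T k d))^-1);
  have := n_ge0 hN (ev (T k p1) * (q ^+ k *: x)).
have : 0 <= b1 * nrm x by apply: mulr_ge0.
nra.
Qed.

Definition Erep N (b : R) (g : B) := exists (I : finType) (a : I -> B) (kk : I -> nat),
  g = \sum_i a i * y ^+ kk i /\ (forall i, (N <= kk i)%N) /\
  \sum_i nrm (a i) * nrm y ^+ kk i <= b.

Lemma E_norm N b g : Erep N b g -> nrm g <= b.
Proof.
move=> [I [a [kk [-> [_ hb]]]]]; apply: le_trans (nsum hN _ _ _ _) _.
apply: le_trans hb; apply: ler_sum => i _.
apply: le_trans (nM hN _ _) _; apply: ler_wpM2l; first exact: n_ge0.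
exact: nX.
Qed.

Lemma E1 : Erep 0 1 1.
Proof.
exists 'I_1, (fun _ => 1), (fun _ => 0%N); split; first by rewrite big_ord1 expr0 mulr1.
by split => //; rewrite big_ord1 expr0 mulr1 (n1 hN).
Qed.

Variables (n : nat) (p d : nat -> {poly R[i]}).
Hypothesis hd : forall j : 'I_n, forall l, spectrum x l -> (d j.+1).[l] != 0.
Hypothesis hp : forall j : 'I_n, (p j.+1).[0] = 0.
Variable C : R.
Hypothesis C0 : 0 <= C.
Hypothesis hC : forall (j : 'I_n) k, nrm (rt k (p j.+1) (d j.+1)) <= C * cm q ^+ k.

Definition f := \sum_(j < n) rat_at (p j.+1) (d j.+1) x * y ^+ j.+1.
Definition Z := \sum_(j < n) nrm y ^+ j.+1.
Definition A := C * Z.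

Lemma Z0 : 0 <= Z.
Proof. by apply: sumr_ge0 => j _; apply: exprn_ge0; exact: n_ge0. Qed.

Lemma E_step N b g : Erep N b g -> Erep N.+1 (b * (A * cm q ^+ N)) (g * f).
Proof.
move=> [I [a [kk [-> [hk hb]]]]].
exists (prod I 'I_n), (fun ij : prod I 'I_n => a ij.1 * rt (kk ij.1) (p ij.2.+1) (d ij.2.+1)),
  (fun ij : prod I 'I_n => (kk ij.1 + ij.2.+1)%N); split.
  rewrite -(pair_bigA _ (fun (i : I) (j : 'I_n) => a i * rt (kk i) (p j.+1) (d j.+1) * y ^+ (kk i + j.+1)%N)) /=.
  rewrite /f mulr_suml; apply: eq_bigr => i _; rewrite mulr_sumr; apply: eq_bigr => j _.
  rewrite -mulrA (mulrA (y ^+ kk i)) rat_comm; last exact: hd.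
  by rewrite -!mulrA exprD.
split; first by move=> [i j] /=; rewrite addnS ltnS; apply: leq_trans (hk i) (leq_addr _ _).
have Y0 := n_ge0 hN y.
have cq0 := cm_ge0 q.
apply: le_trans (_ : \sum_(ij : prod I 'I_n) (nrm (a ij.1) * nrm y ^+ kk ij.1) *
   (C * cm q ^+ N * nrm y ^+ ij.2.+1) <= _).
  apply: ler_sum => [[i j]] _ /=.
  have h1 : nrm (a i * rt (kk i) (p j.+1) (d j.+1)) <= nrm (a i) * (C * cm q ^+ N).
    apply: le_trans (nM hN _ _) _; apply: ler_wpM2l; first exact: n_ge0.
    apply: le_trans (hC j (kk i)) _; apply: ler_wpM2l => //.
    by apply: ler_wiXn2l => //; exact: ltW.
  rewrite exprD.
  apply: le_trans (ler_wpM2r (mulr_ge0 (exprn_ge0 _ Y0) (exprn_ge0 _ Y0)) h1) _.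
  rewrite le_eqVlt; apply/orP; left; apply/eqP; ring.
rewrite -(pair_bigA _ (fun (i : I) (j : 'I_n) => (nrm (a i) * nrm y ^+ kk i) * (C * cm q ^+ N * nrm y ^+ j.+1))) /=.
rewrite -big_distrlr /= -mulr_sumr.
have hA : C * cm q ^+ N * Z = A * cm q ^+ N by rewrite /A; ring.
rewrite /Z in hA; rewrite hA; apply: ler_wpM2r => //.
apply: mulr_ge0; first by apply: mulr_ge0 => //; exact: Z0.
exact: exprn_ge0.
Qed.

Definition beta N := \prod_(m < N) (A * cm q ^+ m).

Lemma E_pow N : Erep N (beta N) (f ^+ N).
Proof.
elim: N => [|N ih]; first by rewrite expr0 /beta big_ord0; exact: E1.
by rewrite exprSr /beta big_ord_recr /=; apply: E_step.
Qed.

Lemma A0 : 0 <= A.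
Proof. apply: mulr_ge0 => //; exact: Z0. Qed.

Lemma beta0 N : 0 <= beta N.
Proof.
apply: prodr_ge0 => m _; apply: mulr_ge0; first exact: A0.
apply: exprn_ge0; exact: cm_ge0.
Qed.

Lemma beta_small rho : 0 < rho -> exists N, beta N <= rho ^+ N / 2.
Proof.
move=> r0; have a0 := A0.
have hq01 : 0 <= cm q < 1 by apply/andP; split; [exact: cm_ge0|exact: hq1].
have e0 : 0 < rho / (2 * (A + 1)) by apply: divr_gt0 => //; lra.
have [N0 hN0] := @pow_small R _ _ hq01 e0.
have hA k : (N0 <= k)%N -> A * cm q ^+ k <= rho / 2.
  move=> hk; have := hN0 k hk; rewrite ltr_pdivlMr; last by lra.
  have := exprn_ge0 k (cm_ge0 q); nra.
have hb m : beta (N0 + m) <= beta N0 * (rho / 2) ^+ m.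
  elim: m => [|m ih]; first by rewrite addn0 expr0 mulr1.
  rewrite addnS {1}/beta big_ord_recr /= -/(beta (N0 + m)) exprSr (mulrA (beta N0)).
  apply: le_trans (ler_wpM2l (beta0 _) (hA _ (leq_addr _ _))) _.
  apply: ler_wpM2r => //; lra.
have h2 : 0 <= (2^-1 : R) < 1 by apply/andP; split; lra.
have bN0 := beta0 N0.
have e1 : 0 < rho ^+ N0 / (2 * beta N0 + 1).
  by apply: divr_gt0; [exact: exprn_gt0|lra].
have [m0 hm0] := @pow_small R _ _ h2 e1.
exists (N0 + m0)%N; apply: le_trans (hb m0) _.
have := hm0 m0 (leqnn _); rewrite ltr_pdivlMr; last by lra.
rewrite exprD -(mulrC 2^-1) exprMn.
have X0 : 0 <= (2^-1 : R) ^+ m0 by apply: exprn_ge0; lra.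
have Q0 : 0 <= rho ^+ m0 by apply: exprn_ge0; lra.
move=> hX.
have : beta N0 * 2^-1 ^+ m0 * 2 <= rho ^+ N0 by nra.
move=> hY.
have : beta N0 * 2^-1 ^+ m0 * 2 * rho ^+ m0 <= rho ^+ N0 * rho ^+ m0.
  by apply: ler_wpM2r.
lra.
Qed.

Lemma fpow_small rho : 0 < rho -> exists N, nrm (f ^+ N) <= rho ^+ N / 2.
Proof.
move=> r0; have [N hN'] := beta_small _ r0; exists N.
exact: le_trans (E_norm _ _ _ (E_pow N)) hN'.
Qed.

Lemma f_notunit : f \isn't a GRing.unit.
Proof.
apply/negP => fu.
set G := nrm f^-1.
have G0 : 0 <= G by exact: n_ge0.
have r0 : 0 < (G + 1)^-1 by rewrite invr_gt0; lra.
have [N hN'] := fpow_small _ r0.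
have h1 : 1 <= nrm (f ^+ N) * G ^+ N.
  rewrite -(n1 hN) -(mulrV (unitrX N fu)) -exprVn.
  apply: le_trans (nM hN _ _) _; apply: ler_wpM2l; first exact: n_ge0.
  exact: nX.
have h2 : (G + 1)^-1 ^+ N * G ^+ N <= 1.
  rewrite -exprMn; apply: exprn_ile1.
    by apply: mulr_ge0 => //; exact: ltW.
  by rewrite mulrC -ler_pdivlMr ?div1r ?invrK; lra.
have h3 := exprn_ge0 N G0.
have h4 := n_ge0 hN (f ^+ N).
have : nrm (f ^+ N) * G ^+ N <= (G + 1)^-1 ^+ N / 2 * G ^+ N by apply: ler_wpM2r.
lra.
Qed.

Lemma geom_id (h : B) N : (1 - h) * \sum_(i < N) h ^+ i = 1 - h ^+ N /\
  (\sum_(i < N) h ^+ i) * (1 - h) = 1 - h ^+ N.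
Proof.
elim: N => [|N [ih1 ih2]]; first by rewrite big_ord0 mulr0 mul0r expr0 subrr.
rewrite big_ord_recr /=; split.
  by rewrite mulrDr ih1 mulrBl mul1r -exprS addrA subrK.
by rewrite mulrDl ih2 mulrBr mulr1 -exprSr addrA subrK.
Qed.

Lemma f_unit l : l != 0 -> (l%:A - f) \is a GRing.unit.
Proof.
move=> l0; have r0 : 0 < cm l by rewrite lt_def cm_eq0 l0 cm_ge0.
have [N hN'] := fpow_small _ r0.
set g := l^-1 *: f.
have hg : nrm (g ^+ N) <= 2^-1.
  rewrite /g exprZn (nZ hN) cmX cmV.
  have h1 := exprn_gt0 N r0.
  rewrite exprVn ler_pdivrMl //; lra.
have u1 := neumann hN _ hg.
have [hP1 hP2] := geom_id g N.
set P := \sum_(i < N) g ^+ i in hP1 hP2.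
have [v [hv1 hv2]] := unitrP u1.
have hgu : (1 - g) \is a GRing.unit.
  apply/unitrP; exists (v * P); split.
    by rewrite -mulrA hP2 hv1.
  have e1 : (1 - g) * (P * v) = 1 by rewrite mulrA hP1 hv2.
  have e2 : (v * P) * (1 - g) = 1 by rewrite -mulrA hP2 hv1.
  have e3 : v * P = P * v by rewrite -[LHS]mulr1 -e1 mulrA e2 mul1r.
  by rewrite e3 e1.
have -> : l%:A - f = l *: (1 - g) by rewrite scalerBr /g scalerA mulfV // scale1r.
by rewrite scaler_unit // unitfE.
Qed.

End Alg.

Theorem lemma3p4 (R : realType) (B : unitAlgType R[i]) (nrm : B -> R)
  (q : R[i]) (x y : B) (n : nat) (p d : nat -> {poly R[i]}) :
  is_banach_algebra_norm nrm ->
  0 < `|q| < 1 ->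
  x * y = q^-1 *: (y * x) ->
  qhull q (spectrum x) = spectrum x ->
  (forall k, (1 <= k <= n)%N -> forall l, spectrum x l -> (d k).[l] != 0) ->
  (forall k, (1 <= k <= n)%N -> (p k).[0] / (d k).[0] = 0) ->
  quasinilpotent (\sum_(1 <= k < n.+1) rat_at (p k) (d k) x * y ^+ k).
Proof.
move=> hN hq hxy' hhull hd hpd.
move: hq; rewrite cmE => /andP[hq0' hq1'].
have hq0 : 0 < cm q by rewrite -ltcR.
have hq1 : cm q < 1 by rewrite -ltcR.
have qn0 : q != 0 by rewrite -cm_eq0 gt_eqF.
have hxy : y * x = q *: (x * y) by rewrite hxy' scalerA mulfV // scale1r.
have hS : forall l, spectrum x l -> spectrum x (q * l).
  move=> l hl; rewrite -hhull; right; exists 1%N; exists l => //; by rewrite expr1.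
have h0 : spectrum x 0 by rewrite -hhull; left.
have hd' : forall (j : 'I_n) l, spectrum x l -> (d j.+1).[l] != 0.
  by move=> j; apply: hd; rewrite ltn_ord.
have hp' : forall (j : 'I_n), (p j.+1).[0] = 0.
  move=> j; have := hpd j.+1 (ltn_ord j); move/eqP; rewrite mulf_eq0 invr_eq0.
  by case/orP => /eqP // h; move: (hd' j 0 h0); rewrite h eqxx.
have [Cf hCf] := choice (fun j : 'I_n => @bound_rat _ _ _ hN _ _ hq1 hS h0 _ _ (hp' j) (hd' j)).
set C := \sum_(j < n) Cf j.
have C0 : 0 <= C by apply: sumr_ge0 => j _; case: (hCf j).
have hC : forall (j : 'I_n) k, nrm (rt _ _ q x k (p j.+1) (d j.+1)) <= C * cm q ^+ k.
  move=> j k; case: (hCf j) => c0 hc; apply: le_trans (hc k) _.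
  apply: ler_wpM2r; first by apply: exprn_ge0; exact: cm_ge0.
  rewrite /C (bigD1 j) //= lerDl; apply: sumr_ge0 => i _; by case: (hCf i).
have -> : \sum_(1 <= k < n.+1) rat_at (p k) (d k) x * y ^+ k = f _ _ x y n p d.
  by rewrite big_add1 /= big_mkord.
rewrite /quasinilpotent; apply/funext => l; apply/propext; split.
  move=> hl; case: (eqVneq l 0) => // l0; exfalso; apply: hl.
  exact: (@f_unit _ _ _ hN _ _ _ hq1 hxy hS h0 _ _ _ hd' _ C0 hC).
move=> /= ->; rewrite /spectrum /= scale0r sub0r unitrN; apply/negP.
exact: (@f_notunit _ _ _ hN _ _ _ hq1 hxy hS h0 _ _ _ hd' _ C0 hC).
Qed.
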